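(* Let $q\ge2$, $N=2^q$, $b>0$, $h=b/N$, and let $A_q=h^2B_h$, where $B_h=(b_{i,j})_{i,j=1}^{N-1}$ is the symmetric Toeplitz matrix with $b_{i,i}=\frac{2N}3-1$, $b_{i,j}=\frac N6-1$ if $|i-j|=1$, and $b_{i,j}=-1$ if $|i-j|\ge2$. For $k=q,q-1,\dots,2$ define $A_{k-1}=I_k^{k-1}A_kI_{k-1}^k$, where $A_k$ has size $n_k=2^k-1$, $I_k^{k-1}:\mathbb R^{n_k}\to\mathbb R^{n_{k-1}}$ is $(I_k^{k-1}\nu)_i=\frac14(\nu_{2i-1}+2\nu_{2i}+\nu_{2i+1})$ and $I_{k-1}^k=2(I_k^{k-1})^T$. Let $D_k$ be the diagonal of $A_k$, let $\eta_0$ satisfy $\lambda_{\max}(D_k^{-1}A_k)\le\eta_0<3$ for all $1\le k\le q$, let $0<\omega<2/\eta_0$, let $0<\eta\le\omega(2-\omega\eta_0)$, and let $K_k=I-\omega D_k^{-1}A_k$. Then for every $1\le k\le q$, $\|K_k\nu\|_{A_k}^2\le\|\nu\|_{A_k}^2-\eta\|A_k\nu\|_{D_k^{-1}}^2$ for all $\nu\in\mathbb R^{n_k}$, and for every $2\le k\le q$, $$\|K_kT^k\|_{A_k}\le\sqrt{1-\eta/4}<1,\qquad T^k=I-I_{k-1}^kA_{k-1}^{-1}I_k^{k-1}A_k.$$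
   Context: For a symmetric positive definite $M$, $\|\nu\|_M=\sqrt{\nu^TM\nu}$ and for a matrix $X$, $\|X\|_M$ is the induced operator norm. $K_k$ is the damped Jacobi iteration matrix on level $k$, $T^k$ the coarse grid correction operator between levels $k$ and $k-1$ (Galerkin coarse matrices), and $K_kT^k$ the two-level iteration matrix at level $k$ of the multigrid hierarchy. $A_q$ is the piecewise linear finite element stiffness matrix of the nonlocal operator $u\mapsto\int_0^b[u(x)-u(y)]dy$ with zero exterior condition. *)

(* Defs.v *)
From HB Require Import structures.
From mathcomp Require Import all_boot all_order all_algebra.
From mathcomp Require Import classical_sets reals.
Set Implicit Arguments. Unset Strict Implicit. Unset Printing Implicit Defensive.
Import Order.TTheory GRing.Theory Num.Theory.
Local Open Scope ring_scope.
Local Open Scope classical_set_scope.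

Section Defs.
Variable R : realType.

Definition Afine (b : R) (k : nat) : 'M[R]_(2 ^ k - 1) :=
  let N : R := (2 ^ k)%:R in
  let h : R := b / N in
  \matrix_(i, j)
    (h ^+ 2 *
     (if i == j then 2 * N / 3 - 1
      else if ((i : nat) == j.+1) || ((j : nat) == i.+1) then N / 6 - 1
      else -1)).

(* Restriction I_{k+1}^{k} : R^{n_{k+1}} -> R^{n_k}, n_k = 2^k - 1.
   1-based (I v)_i = (v_{2i-1} + 2 v_{2i} + v_{2i+1})/4, written 0-based. *)
Definition restr (k : nat) : 'M[R]_(2 ^ k - 1, 2 ^ k.+1 - 1) :=
  \matrix_(i, j)
    (if (j : nat) == (2 * i)%N.+1 then 1 / 2
     else if ((j : nat) == (2 * i)%N) || ((j : nat) == (2 * i)%N.+2) then 1 / 4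
     else 0).

Definition prolong (k : nat) : 'M[R]_(2 ^ k.+1 - 1, 2 ^ k - 1) :=
  2 *: (restr k)^T.

Definition coarsen (k : nat) (M : 'M[R]_(2 ^ k.+1 - 1)) : 'M[R]_(2 ^ k - 1) :=
  restr k *m M *m prolong k.

Fixpoint Aup (b : R) (m k : nat) : 'M[R]_(2 ^ k - 1) :=
  match m with
  | 0 => Afine b k
  | m'.+1 => coarsen (Aup b m' k.+1)
  end.

Definition Alev (b : R) (q k : nat) : 'M[R]_(2 ^ k - 1) := Aup b (q - k) k.

Definition Dg n (M : 'M[R]_n) : 'M[R]_n := diag_mx (\row_i M i i).

Definition Kjac n (omega : R) (M : 'M[R]_n) : 'M[R]_n :=
  1%:M - omega *: (invmx (Dg M) *m M).

Definition mnorm n (M : 'M[R]_n) (v : 'cV[R]_n) : R :=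
  Num.sqrt ((v^T *m M *m v) 0 0).

Definition opnorm n (M X : 'M[R]_n) : R :=
  sup [set r | exists v : 'cV[R]_n, mnorm M v <= 1 /\ r = mnorm M (X *m v)].

Definition Tcgc (b : R) (q k : nat) : 'M[R]_(2 ^ k.+1 - 1) :=
  1%:M - prolong k *m invmx (Alev b q k) *m restr k *m Alev b q k.+1.

End Defs.

(* Main.v *)
Require Import Defs.
From HB Require Import structures.
From mathcomp Require Import all_boot all_order all_algebra.
From mathcomp Require Import classical_sets reals.
From mathcomp Require complex.
From mathcomp Require Import zify ring lra.
Import Order.TTheory GRing.Theory Num.Theory.
Local Open Scope ring_scope.
Set Implicit Arguments. Unset Strict Implicit. Unset Printing Implicit Defensive.



Module RayM.
Import complex.
Local Open Scope sesquilinear_scope.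
Section Ray.
Variable R : rcfType.
Local Notation C := (R[i]).
Local Notation f := (real_complex R).
Local Notation RE := (@complex.Re R).

Lemma conjC_f (x : R) : (f x)^* = f x.
Proof. by rewrite conj_Creal // complex_real. Qed.

Lemma rayleigh n (S : 'M[R]_n) (eta : R) :
  S^T = S -> (forall a, eigenvalue S a -> a <= eta) ->
  forall u : 'cV[R]_n, (u^T *m S *m u) 0 0 <= eta * (u^T *m u) 0 0.
Proof.
move=> Ssym Heig u.
pose SC := map_mx f S.
have herm : SC \is hermsymmx.
  apply/is_hermitianmxP; rewrite expr0 scale1r; apply/matrixP => i j.
  by rewrite !mxE conjC_f -{1}Ssym mxE.
have /orthomx_spectralP hSC := hermitian_normalmx herm.
set P := spectralmx SC in hSC; set Dd := spectral_diag SC in hSC.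
have Pu : P \is unitarymx by apply: spectral_unitarymx.
have Dreal := hermitian_spectral_diag_real herm.
have PV : invmx P = P ^t* by apply: invmx_unitary.
have Punit : P \in unitmx by apply: unitarymx_unit.
have Dr : forall j, Dd 0 j = f (RE (Dd 0 j)).
  move=> j; have /mxOverP/(_ 0 j) := Dreal.
  by case: (Dd 0 j) => a b; rewrite complex_real => /eqP ->.
have Deig : forall j, RE (Dd 0 j) <= eta.
  move=> j; apply: Heig.
  suff : eigenvalue SC (Dd 0 j).
    by rewrite eigenvalue_root_char -map_char_poly (Dr j) fmorph_root -eigenvalue_root_char.
  apply/eigenvalueP.
  exists (row j P).
    have -> : SC = invmx P *m diag_mx Dd *m P by [].
    rewrite -row_mul !mulmxA mulmxV // mul1mx row_mul.
    by rewrite -row_mul mul_diag_mx; apply/rowP => k; rewrite !mxE.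
  apply/eqP => h; have := congr1 (mulmx^~ (invmx P)) h.
  rewrite -row_mul mulmxV // mul0mx => /rowP /(_ j); rewrite !mxE eqxx /= => /eqP.
  by rewrite oner_eq0.
set uC := map_mx f u.
have uCt : uC^t* = map_mx f u^T by apply/matrixP => i j; rewrite !mxE conjC_f.
have E1 : f ((u^T *m S *m u) 0 0) = (uC^t* *m SC *m uC) 0 0.
  by rewrite uCt /SC /uC -!map_mxM [RHS]mxE.
have E2 : f ((u^T *m u) 0 0) = (uC^t* *m uC) 0 0.
  by rewrite uCt /uC -!map_mxM [RHS]mxE.
have PtP : P^t* *m P = 1%:M by rewrite -PV mulVmx.
set w := P *m uC.
have wt : w^t* = uC^t* *m P^t* by rewrite /w trmx_mul map_mxM.
have E3 : uC^t* *m SC *m uC = w^t* *m diag_mx Dd *m w.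
  by rewrite hSC wt PV !mulmxA.
have E4 : uC^t* *m uC = w^t* *m w.
  by rewrite wt /w -!mulmxA (mulmxA _ P) PtP mul1mx.
have H : (uC^t* *m SC *m uC) 0 0 <= f eta * (uC^t* *m uC) 0 0.
  rewrite E3 E4 mul_mx_diag !mxE mulr_sumr.
  apply: ler_sum => k _; rewrite !mxE.
  rewrite mulrAC [f eta * _]mulrC; apply: ler_wpM2l.
    by rewrite mulrC mul_conjC_ge0.
  by rewrite Dr lecR.
by rewrite -lecR; move: H; rewrite -E1 -E2 -rmorphM.
Qed.
End Ray.
End RayM.


Import RayM.


Ltac ifs := repeat (match goal with |- context [if ?c then _ else _] =>
  let H := fresh "H" in case: (boolP c) => H;
  [rewrite ?H /= | rewrite ?(negbTE H) /=]; try (exfalso; lia) end).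

Section A.
Variable R : realType.

Definition Tf (x y : nat) : R :=
  if x == y then 2/3 else if (x == y.+1) || (y == x.+1) then 1/6 else 0.

Definition Mk k : 'M[R]_(2 ^ k - 1) :=
  \matrix_(i, j) ((2 ^ k)%:R * Tf i j - 1).

Lemma Afine_Mk b k : Afine b k = (b / (2 ^ k)%:R) ^+ 2 *: Mk k.
Proof.
apply/matrixP => i j; rewrite !mxE /Tf -val_eqE /=.
ifs; lra.
Qed.

Lemma sum_if1 n (c : nat -> bool) (G : nat -> R) i0 : (i0 < n)%N -> c i0 ->
  (forall i, (i < n)%N -> c i -> i = i0) ->
  \sum_(i < n) (if c i then G i else 0) = G i0.
Proof.
move=> lt ci0 un; rewrite (bigD1 (Ordinal lt)) //= ci0 big1 ?addr0 // => i /eqP ne.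
case: ifP => // ci; exfalso; apply: ne; apply: val_inj => /=; exact: un (ltn_ord i) ci.
Qed.

Lemma if_mul (b : bool) (c y : R) : (if b then c else 0) * y = if b then c * y else 0.
Proof. by case: b; rewrite ?mul0r. Qed.

Lemma restr_sum k (i : 'I_(2 ^ k - 1)) (G : nat -> R) :
  \sum_(j < 2 ^ k.+1 - 1) restr R k i j * G j =
  1/4 * G (2 * i)%N + 1/2 * G (2 * i).+1 + 1/4 * G (2 * i).+2.
Proof.
have hi := ltn_ord i.
have hk : (2 ^ k.+1 = 2 * 2 ^ k)%N by rewrite expnS.
have -> : \sum_(j < 2 ^ k.+1 - 1) restr R k i j * G j =
   \sum_(j < 2 ^ k.+1 - 1) ((if (j : nat) == (2 * i)%N then 1/4 * G j else 0)
    + (if (j : nat) == (2 * i).+1 then 1/2 * G j else 0)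
    + (if (j : nat) == (2 * i).+2 then 1/4 * G j else 0)).
  apply: eq_bigr => j _; rewrite mxE; ifs; ring.
rewrite !big_split /=.
rewrite (@sum_if1 _ (fun j => j == (2 * i)%N) (fun j => 1/4 * G j) (2 * i)%N); [|lia|by rewrite /= eqxx|by move=> x _ /eqP].
rewrite (@sum_if1 _ (fun j => j == (2 * i).+1) (fun j => 1/2 * G j) (2 * i).+1); [|lia|by rewrite /= eqxx|by move=> x _ /eqP].
rewrite (@sum_if1 _ (fun j => j == (2 * i).+2) (fun j => 1/4 * G j) (2 * i).+2); [|lia|by rewrite /= eqxx|by move=> x _ /eqP]; ring.
Qed.


Lemma coarsen_Mk k : coarsen (Mk k.+1) = 2 *: Mk k.
Proof.
apply/matrixP => i l; rewrite /coarsen /prolong.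
set r := restr R k; set M := Mk k.+1.
have pe : forall m, (2 *: r^T) m l = 2 * r l m by move=> m; rewrite !mxE.
have pm : forall m, (r *m M) i m = \sum_j r i j * M j m by move=> m; rewrite !mxE.
rewrite mxE.
under eq_bigr => m _ do rewrite pe pm mulrC (mulrC 2) -mulrA.
pose N' : R := (2 ^ k.+1)%:R.
have inner : forall m : 'I_(2 ^ k.+1 - 1), \sum_j r i j * M j m =
   1/4 * (N' * Tf (2 * i)%N m - 1) + 1/2 * (N' * Tf (2 * i).+1 m - 1)
   + 1/4 * (N' * Tf (2 * i).+2 m - 1).
  move=> m; rewrite /M; under eq_bigr => j _ do rewrite [Mk _ _ _]mxE; rewrite /r.
  exact: (restr_sum i (fun x => N' * Tf x m - 1)).
under eq_bigr => m _ do rewrite inner.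
rewrite /r.
have := (restr_sum l (fun m => 2 * (1/4 * (N' * Tf (2 * i)%N m - 1) + 1/2 * (N' * Tf (2 * i).+1 m - 1)
   + 1/4 * (N' * Tf (2 * i).+2 m - 1)))) => /= ->.
rewrite !mxE /N' expnS natrM /Tf.
ifs; lra.
Qed.

Lemma coarsenZ k (c : R) (M : 'M[R]_(2 ^ k.+1 - 1)) : coarsen (c *: M) = c *: coarsen M.
Proof. by rewrite /coarsen -(scalemxAr c (restr R k) M) -(scalemxAl c (restr R k *m M)). Qed.

Lemma Aup_Mk (b : R) m k : Aup b m k = ((2 ^ m)%:R * (b / (2 ^ (k + m))%:R) ^+ 2) *: Mk k.
Proof.
elim: m k => [|m IH] k /=; first by rewrite Afine_Mk addn0 expn0 mulr1n mul1r.
rewrite IH coarsenZ coarsen_Mk scalerA addSnnS; congr (_ *: _).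
by rewrite expnS natrM; ring.
Qed.

Lemma Alev_Mk (b : R) q k : 0 < b -> exists2 a : R, 0 < a & Alev b q k = a *: Mk k.
Proof.
move=> b0; rewrite /Alev Aup_Mk; eexists; last reflexivity.
by rewrite mulr_gt0 // ?ltr0n ?expn_gt0 // exprn_gt0 // divr_gt0 // ltr0n expn_gt0.
Qed.

Lemma Alev_coarsen (b : R) q k : (k < q)%N -> Alev b q k = coarsen (Alev b q k.+1).
Proof. by move=> kq; rewrite /Alev -(subnSK kq). Qed.

End A.

Section B.
Variable R : realType.

Definition qf n (M : 'M[R]_n) (v : 'cV[R]_n) : R := (v^T *m M *m v) 0 0.
Definition ext n (e : 'cV[R]_n) (j : nat) : R :=
  if j is j'.+1 then oapp (fun i : 'I_n => e i 0) 0 (insub j') else 0.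

Lemma ext_ord n (e : 'cV[R]_n) (i : 'I_n) : ext e i.+1 = e i 0.
Proof. by rewrite /= valK. Qed.

Lemma ext_out n (e : 'cV[R]_n) j : (n <= j)%N -> ext e j.+1 = 0.
Proof. by move=> h; rewrite /= insubF // ltnNge h. Qed.

Lemma sum_pickE n (e : 'cV[R]_n) x c :
  \sum_(j < n) (if (j : nat) == x then c * e j 0 else 0) = c * ext e x.+1.
Proof.
case: (ltnP x n) => h.
  under eq_bigr => j _ do rewrite -ext_ord.
  apply: (@sum_if1 R n (fun j => j == x) (fun j => c * ext e j.+1) x) => //.
  by move=> i _ /eqP.
rewrite ext_out // mulr0 big1 // => j _; case: eqP => // hj.
by move: (ltn_ord j); rewrite hj ltnNge h.
Qed.

Lemma sum_pickE' n (e : 'cV[R]_n) x c :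
  \sum_(j < n) (if (j.+1 == x)%N then c * e j 0 else 0) = c * ext e x.
Proof.
case: x => [|x]; first by rewrite mulr0 big1.
under eq_bigr => j _ do rewrite eqSS.
exact: sum_pickE.
Qed.

Lemma Tf_split x y : Tf R x y = (if y == x then 2/3 else 0) + (if y == x.+1 then 1/6 else 0)
  + (if y.+1 == x then 1/6 else 0).
Proof. rewrite /Tf; ifs; ring. Qed.

Lemma rowT n (e : 'cV[R]_n) (i : nat) : \sum_(j < n) Tf R i j * e j 0 =
  2/3 * ext e i.+1 + 1/6 * ext e i.+2 + 1/6 * ext e i.
Proof.
under eq_bigr => j _ do rewrite Tf_split !mulrDl !if_mul.
by rewrite !big_split sum_pickE sum_pickE sum_pickE' /=; ring. Qed.


Lemma qf_Mk k (e : 'cV[R]_(2 ^ k - 1)) :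
  qf (Mk R k) e = (2 ^ k)%:R * \sum_(0 <= i < 2 ^ k - 1) ext e i.+1 *
     (2/3 * ext e i.+1 + 1/6 * ext e i.+2 + 1/6 * ext e i)
   - (\sum_(0 <= i < 2 ^ k - 1) ext e i.+1) ^+ 2.
Proof.
set N : R := (2 ^ k)%:R.
set S := \sum_(0 <= i < 2 ^ k - 1) ext e i.+1.
have inner : forall i : 'I_(2 ^ k - 1), (Mk R k *m e) i 0 =
    N * (2/3 * ext e i.+1 + 1/6 * ext e i.+2 + 1/6 * ext e i) - S.
  move=> i; rewrite mxE -rowT mulr_sumr.
  have -> : S = \sum_(j < 2 ^ k - 1) e j 0.
    by rewrite /S big_mkord; apply: eq_bigr => j _; rewrite ext_ord.
  by rewrite -sumrB; apply: eq_bigr => j _; rewrite mxE; ring.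
rewrite /qf -mulmxA mxE.
transitivity (\sum_(0 <= i < 2 ^ k - 1) ext e i.+1 *
   (N * (2/3 * ext e i.+1 + 1/6 * ext e i.+2 + 1/6 * ext e i) - S)).
  by rewrite big_mkord; apply: eq_bigr => i _; rewrite inner mxE ext_ord.
by rewrite expr2 {3}/S !mulr_sumr -sumrB; apply: eq_bigr => i _; ring.
Qed.

Definition phi (a b : R) := (a ^+ 2 + a * b + b ^+ 2) / 3.

Lemma phisum (E : nat -> R) c n :
  \sum_(0 <= i < n.+1) phi (E i - c) (E i.+1 - c) =
  \sum_(0 <= i < n) E i.+1 * (2/3 * E i.+1 + 1/6 * E i.+2 + 1/6 * E i)
  - 2 * c * \sum_(0 <= i < n) E i.+1 + n.+1%:R * c ^+ 2
  + (1/3 * (E 0 ^+ 2 + E n.+1 ^+ 2) + 1/6 * (E 0 * E 1 + E n * E n.+1)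
     - c * (E 0 + E n.+1)).
Proof.
elim: n => [|n IH].
  by rewrite !big_nat1 !big_geq // /phi; field.
rewrite big_nat_recr //= IH !big_nat_recr //= /phi -[n.+2]addn1 -[n.+1]addn1 !natrD.
by field.
Qed.


Lemma sq_le0 (a : R) : a ^+ 2 <= 0 -> a = 0.
Proof. by move=> h; apply/eqP; rewrite -sqrf_eq0 eq_le h sqr_ge0. Qed.

Lemma phi_ge0 a b : 0 <= phi a b.
Proof.
rewrite /phi; have -> : (a ^+ 2 + a * b + b ^+ 2) / 3 = ((a + b / 2) ^+ 2 + 3 / 4 * b ^+ 2) / 3
  by field.
apply: divr_ge0 => //; apply: addr_ge0; first exact: sqr_ge0.
apply: mulr_ge0; last exact: sqr_ge0. by rewrite divr_ge0.
Qed.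

Lemma phi_eq0 a b : phi a b = 0 -> a = 0 /\ b = 0.
Proof.
move=> h; split; apply: sq_le0.
  have -> : a ^+ 2 = 6 * phi a b - (b ^+ 2 + (a + b) ^+ 2) by rewrite /phi; field.
  by rewrite h mulr0 sub0r oppr_le0 addr_ge0 // sqr_ge0.
have -> : b ^+ 2 = 6 * phi a b - (a ^+ 2 + (a + b) ^+ 2) by rewrite /phi; field.
by rewrite h mulr0 sub0r oppr_le0 addr_ge0 // sqr_ge0.
Qed.

Lemma pair_ineq a m c : (m - (a + c) / 2) ^+ 2 / 6 <= phi a m + phi m c.
Proof.
rewrite -subr_ge0.
have -> : phi a m + phi m c - (m - (a + c) / 2) ^+ 2 / 6 =
   (a - c) ^+ 2 / 6 + (a + c + 2 * m) ^+ 2 / 8 by rewrite /phi; field.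
by rewrite addr_ge0 // divr_ge0 // sqr_ge0.
Qed.

Lemma pow2S1 k : ((2 ^ k - 1).+1 = 2 ^ k)%N.
Proof. by rewrite subn1 prednK // expn_gt0. Qed.

Lemma qf_phi k (e : 'cV[R]_(2 ^ k - 1)) :
  qf (Mk R k) e = (2 ^ k)%:R * \sum_(0 <= i < (2 ^ k - 1).+1)
     phi (ext e i - (\sum_(0 <= j < 2 ^ k - 1) ext e j.+1) / (2 ^ k)%:R)
         (ext e i.+1 - (\sum_(0 <= j < 2 ^ k - 1) ext e j.+1) / (2 ^ k)%:R).
Proof.
rewrite phisum qf_Mk ext_out // pow2S1.
have N0 : (2 ^ k)%:R != 0 :> R by rewrite pnatr_eq0 -lt0n expn_gt0.
rewrite /=; by field.
Qed.

Lemma qf_Mk_ge0 k (e : 'cV[R]_(2 ^ k - 1)) : 0 <= qf (Mk R k) e.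
Proof.
rewrite qf_phi mulr_ge0 ?ler0n //; apply: sumr_ge0 => i _; exact: phi_ge0.
Qed.

Lemma qf_Mk_eq0 k (e : 'cV[R]_(2 ^ k - 1)) : qf (Mk R k) e = 0 -> e = 0.
Proof.
have N0 : (2 ^ k)%:R != 0 :> R by rewrite pnatr_eq0 -lt0n expn_gt0.
rewrite qf_phi => /eqP; rewrite mulf_eq0 (negbTE N0) orFb big_mkord.
set c := (\sum_(0 <= j < 2 ^ k - 1) ext e j.+1) / (2 ^ k)%:R.
move=> /eqP hs.
have H := psumr_eq0P (fun (i : 'I_(2 ^ k - 1).+1) _ => phi_ge0 (ext e i - c) (ext e i.+1 - c)) hs.
have H' : forall i : nat, (i < (2 ^ k - 1).+1)%N -> (ext e i - c = 0) /\ (ext e i.+1 - c = 0).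
  move=> i hi; apply: phi_eq0; exact: (H (Ordinal hi) isT).
have c0 : c = 0.
  by have [+ _] := H' 0%N (ltn0Sn _); rewrite /= sub0r => /eqP; rewrite oppr_eq0 => /eqP.
apply/matrixP => i j; rewrite ord1 mxE -ext_ord.
have [_ +] := H' i (leqW (ltn_ord i)); rewrite c0 subr0 => ->.
done.
Qed.

Lemma pair_sum (g : nat -> R) P :
  \sum_(0 <= i < (2 * P)%N) g i = \sum_(0 <= i < P) (g (2 * i)%N + g (2 * i).+1).
Proof.
elim: P => [|P IH]; first by rewrite muln0 !big_geq.
have -> : (2 * P.+1 = (2 * P).+2)%N by lia.
by rewrite !big_nat_recr //= IH addrA.
Qed.

Lemma approx_quad k (e : 'cV[R]_(2 ^ k.+1 - 1)) :
  ((2 ^ k.+1)%:R * (2/3) - 1) *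
    \sum_(0 <= i < 2 ^ k) (ext e (2 * i).+1 - (ext e (2 * i)%N + ext e (2 * i).+2) / 2) ^+ 2
  <= 4 * qf (Mk R k.+1) e.
Proof.
have hb : ((2 ^ k.+1 - 1).+1 = 2 * 2 ^ k)%N by rewrite pow2S1 expnS.
rewrite qf_phi hb pair_sum.
set N : R := (2 ^ k.+1)%:R.
set c := (\sum_(0 <= j < 2 ^ k.+1 - 1) ext e j.+1) / N.
set X := \sum_(0 <= i < 2 ^ k) _.
set Y := \sum_(0 <= i < 2 ^ k) _.
have X0 : 0 <= X by apply: sumr_ge0 => i _; exact: sqr_ge0.
have N0 : 0 <= N by rewrite ler0n.
have XY : X / 6 <= Y.
  rewrite /X /Y mulr_suml; apply: ler_sum => i _.
  have := pair_ineq (ext e (2 * i)%N - c) (ext e (2 * i).+1 - c) (ext e (2 * i).+2 - c).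
  have -> : ext e (2 * i).+1 - c - (ext e (2 * i)%N - c + (ext e (2 * i).+2 - c)) / 2
     = ext e (2 * i).+1 - (ext e (2 * i)%N + ext e (2 * i).+2) / 2 by field.
  done.
apply: (@le_trans _ _ (4 * (N * (X / 6)))).
  by rewrite -subr_ge0; have -> : 4 * (N * (X / 6)) - (N * (2 / 3) - 1) * X = X by field.
by rewrite ler_wpM2l // ler_wpM2l.
Qed.

End B.


Section C.
Variable R : realType.

Definition ecoarse k (u : 'cV[R]_(2 ^ k.+1 - 1)) : 'cV[R]_(2 ^ k - 1) :=
  \col_i ext u (2 * i).+2.

Lemma Pec_entry k (u : 'cV[R]_(2 ^ k.+1 - 1)) (j : 'I_(2 ^ k.+1 - 1)) :
  (prolong R k *m ecoarse u) j 0 =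
  if odd j then ext u j.+1 else (ext u j + ext u j.+2) / 2.
Proof.
have hj := ltn_ord j.
have hk : (2 ^ k.+1 = 2 * 2 ^ k)%N by rewrite expnS.
have hp : (0 < 2 ^ k)%N by rewrite expn_gt0.
rewrite mxE.
have -> : \sum_(i < 2 ^ k - 1) (prolong R k) j i * (ecoarse u) i 0 =
  \sum_(i < 2 ^ k - 1) ((if (j : nat) == (2 * i)%N then 1/2 * ext u (2 * i).+2 else 0)
    + (if (j : nat) == (2 * i).+1 then ext u (2 * i).+2 else 0)
    + (if (j : nat) == (2 * i).+2 then 1/2 * ext u (2 * i).+2 else 0)).
  apply: eq_bigr => i _; rewrite !mxE; ifs; by field.
rewrite !big_split.
have [m [jm|jm]] : exists m, (j : nat) = (2 * m)%N \/ (j : nat) = (2 * m).+1.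
  exists j./2; have := odd_double_half j; rewrite -mul2n.
  by case: (odd j) => /= h; [right|left]; lia.
- rewrite jm (_ : odd (2 * m) = false); last by rewrite mul2n odd_double.
  rewrite (@big1 _ _ _ _ _ _ (fun i : 'I_(2 ^ k - 1) => if (2 * m)%N == (2 * i).+1 then _ else 0));
    last by move=> i _; have hi' := ltn_ord i; ifs.
  have e1 : \sum_(i < 2 ^ k - 1) (if (2 * m)%N == (2 * i)%N then 1/2 * ext u (2 * i).+2 else 0)
       = 1/2 * ext u (2 * m).+2.
    case: (ltnP m (2 ^ k - 1)) => hm.
      apply: (@sum_if1 R _ (fun i => (2 * m)%N == (2 * i)%N) (fun i => 1/2 * ext u (2 * i).+2) m) => //.
      by move=> i _ /eqP; lia.
    rewrite big1; last by move=> i _; have hi' := ltn_ord i; ifs.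
    by rewrite ext_out ?mulr0 //; lia.
  have e2 : \sum_(i < 2 ^ k - 1) (if (2 * m)%N == (2 * i).+2 then 1/2 * ext u (2 * i).+2 else 0)
       = 1/2 * ext u (2 * m).
    case: m jm {e1} => [|m] jm.
      by rewrite big1 ?mulr0 //; move=> i _; have hi' := ltn_ord i; ifs.
    have -> : (2 * m.+1 = (2 * m).+2)%N by lia.
    apply: (@sum_if1 R _ (fun i => (2 * m).+2 == (2 * i).+2) (fun i => 1/2 * ext u (2 * i).+2) m) => //.
    + lia.
    + by move=> i _ /eqP; lia.
  by rewrite e1 e2 /=; field.
- rewrite jm (_ : odd (2 * m).+1 = true); last by rewrite /= mul2n odd_double.
  rewrite (@big1 _ _ _ _ _ _ (fun i : 'I_(2 ^ k - 1) => if (2 * m).+1 == (2 * i)%N then _ else 0));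
    last by move=> i _; have hi' := ltn_ord i; ifs.
  rewrite (@big1 _ _ _ _ _ _ (fun i : 'I_(2 ^ k - 1) => if (2 * m).+1 == (2 * i).+2 then _ else 0));
    last by move=> i _; have hi' := ltn_ord i; ifs.
  rewrite (@sum_if1 R _ (fun i => (2 * m).+1 == (2 * i).+1) (fun i => ext u (2 * i).+2) m).
  + by rewrite /= add0r addr0.
  + lia.
  + by rewrite /= eqxx.
  + by move=> i _ /eqP; lia.
Qed.

Lemma resid_norm k (u : 'cV[R]_(2 ^ k.+1 - 1)) :
  ((u - prolong R k *m ecoarse u)^T *m (u - prolong R k *m ecoarse u)) 0 0 =
  \sum_(0 <= i < 2 ^ k) (ext u (2 * i).+1 - (ext u (2 * i)%N + ext u (2 * i).+2) / 2) ^+ 2.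
Proof.
set X := prolong R k *m ecoarse u.
have rj : forall j, (u - X) j 0 = u j 0 - X j 0 by move=> j; rewrite !mxE.
have rt : forall j, (u - X)^T 0 j = (u - X) j 0 by move=> j; rewrite mxE.
pose f j := if odd j then 0 else (ext u j.+1 - (ext u j + ext u j.+2) / 2) ^+ 2.
rewrite mxE.
transitivity (\sum_(0 <= j < 2 ^ k.+1 - 1) f j).
  rewrite big_mkord; apply: eq_bigr => j _; rewrite rt rj /X Pec_entry -ext_ord /f.
  by case: (odd j); rewrite -?expr2 // subrr expr0n.
have hp : (0 < 2 ^ k)%N by rewrite expn_gt0.
have hn : (2 ^ k.+1 - 1 = (2 * (2 ^ k - 1)).+1)%N by rewrite expnS; lia.
have ho : odd (2 ^ k.+1 - 1) by rewrite hn /= mul2n odd_double.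
have fn : f (2 ^ k.+1 - 1)%N = 0 by rewrite /f ho.
have hb : ((2 ^ k.+1 - 1).+1 = 2 * 2 ^ k)%N by rewrite pow2S1 expnS.
transitivity (\sum_(0 <= j < (2 ^ k.+1 - 1).+1) f j).
  by rewrite big_nat_recr //= fn addr0.
rewrite hb pair_sum.
apply: eq_bigr => i _; rewrite /f /= mul2n odd_double /= addr0 -mul2n //.
Qed.

Lemma approx_mx k (u : 'cV[R]_(2 ^ k.+1 - 1)) :
  ((2 ^ k.+1)%:R * (2/3) - 1) *
    ((u - prolong R k *m ecoarse u)^T *m (u - prolong R k *m ecoarse u)) 0 0
  <= 4 * qf (Mk R k.+1) u.
Proof. by rewrite resid_norm; exact: approx_quad. Qed.

End C.


Section D.
Variable R : realType.

Definition bil n (A : 'M[R]_n) (x y : 'cV[R]_n) : R := (x^T *m A *m y) 0 0.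
Definition dot n (x y : 'cV[R]_n) : R := (x^T *m y) 0 0.

Lemma dotE n (x y : 'cV[R]_n) : dot x y = \sum_i x i 0 * y i 0.
Proof. by rewrite /dot mxE; apply: eq_bigr => i _; rewrite mxE. Qed.

Lemma dot_ge0 n (x : 'cV[R]_n) : 0 <= dot x x.
Proof. by rewrite dotE; apply: sumr_ge0 => i _; rewrite -expr2 sqr_ge0. Qed.

Lemma dot_ineq n (x y : 'cV[R]_n) t : 0 < t -> 2 * dot x y <= t * dot x x + dot y y / t.
Proof.
move=> t0; rewrite !dotE !mulr_sumr mulr_suml -big_split; apply: ler_sum => i _ /=.
rewrite -subr_ge0.
have -> : t * (x i 0 * x i 0) + y i 0 * y i 0 / t - 2 * (x i 0 * y i 0) =
  (t * x i 0 - y i 0) ^+ 2 / t by field; rewrite gt_eqF.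
by rewrite divr_ge0 ?sqr_ge0 // ltW.
Qed.

Lemma qf_bil n (A : 'M[R]_n) v : qf A v = bil A v v.
Proof. by []. Qed.

Lemma bilDl n (A : 'M[R]_n) x y z : bil A (x + y) z = bil A x z + bil A y z.
Proof. by rewrite /bil linearD /= !mulmxDl mxE. Qed.

Lemma bilDr n (A : 'M[R]_n) x y z : bil A z (x + y) = bil A z x + bil A z y.
Proof. by rewrite /bil !mulmxDr mxE. Qed.

Lemma bilZl n (A : 'M[R]_n) c x z : bil A (c *: x) z = c * bil A x z.
Proof. by rewrite /bil linearZ /= -!scalemxAl mxE. Qed.

Lemma bilZr n (A : 'M[R]_n) c x z : bil A z (c *: x) = c * bil A z x.
Proof. by rewrite /bil -!scalemxAr mxE. Qed.

Lemma bilNl n (A : 'M[R]_n) x z : bil A (- x) z = - bil A x z.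
Proof. by rewrite -scaleN1r bilZl mulN1r. Qed.

Lemma bilNr n (A : 'M[R]_n) x z : bil A z (- x) = - bil A z x.
Proof. by rewrite -scaleN1r bilZr mulN1r. Qed.

Lemma bil_sym n (A : 'M[R]_n) x y : A^T = A -> bil A x y = bil A y x.
Proof.
move=> AT; have h : forall M : 'M[R]_1, M 0 0 = M^T 0 0 by move=> M; rewrite mxE.
by rewrite /bil h !trmx_mul trmxK AT mulmxA.
Qed.

Lemma bil_dot n (A : 'M[R]_n) x y : A^T = A -> bil A x y = dot (A *m x) y.
Proof. by move=> AT; rewrite /bil /dot trmx_mul AT. Qed.

Lemma bilZA n (A : 'M[R]_n) c x y : bil (c *: A) x y = c * bil A x y.
Proof. by rewrite /bil -scalemxAr -scalemxAl mxE. Qed.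

Lemma smooth_raw n (A : 'M[R]_n) (s omega eta eta0 : R) :
  A^T = A -> 0 < s -> (forall a, eigenvalue (s *: A) a -> a <= eta0) -> 0 < omega ->
  eta <= omega * (2 - omega * eta0) ->
  forall v, qf A ((1%:M - omega *: (s *: A)) *m v)
            <= qf A v - eta * (s * dot (A *m v) (A *m v)).
Proof.
move=> AT s0 Heig om0 heta v.
set g := A *m v.
have Kv : (1%:M - omega *: (s *: A)) *m v = v + (- (omega * s)) *: g.
  by rewrite mulmxBl mul1mx scalerA -scalemxAl scaleNr.
rewrite Kv !qf_bil bilDl !bilDr !bilZl !bilZr.
have bvg : bil A v g = dot g g by rewrite bil_dot.
have bgv : bil A g v = dot g g by rewrite bil_sym // bil_dot.
rewrite bvg bgv.
have ray : bil (s *: A) g g <= eta0 * dot g g.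
  by apply: (rayleigh (S := s *: A)) => //; rewrite linearZ /= AT.
rewrite bilZA in ray.
have G0 := dot_ge0 g.
have h1 : omega * s * (omega * s * bil A g g) <= omega ^+ 2 * s * (eta0 * dot g g).
  have -> : omega * s * (omega * s * bil A g g) = omega ^+ 2 * s * (s * bil A g g) by ring.
  by rewrite ler_wpM2l // mulr_ge0 ?sqr_ge0 // ltW.
have h2 : eta * (s * dot g g) <= omega * (2 - omega * eta0) * (s * dot g g).
  by rewrite ler_wpM2r // mulr_ge0 // ltW.
lra.
Qed.

Lemma dotDr n (x y z : 'cV[R]_n) : dot x (y + z) = dot x y + dot x z.
Proof. by rewrite /dot mulmxDr mxE. Qed.

Lemma twolevel n p (A : 'M[R]_n) (Rr : 'M[R]_(p, n)) (s omega eta eta0 : R) :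
  A^T = A -> (forall x, 0 <= qf A x) -> 0 < s ->
  (forall a, eigenvalue (s *: A) a -> a <= eta0) -> 0 < omega -> 0 <= eta -> eta <= 4 ->
  eta <= omega * (2 - omega * eta0) ->
  (Rr *m A *m (2 *: Rr^T)) \in unitmx ->
  (forall u, exists ec, dot (u - (2 *: Rr^T) *m ec) (u - (2 *: Rr^T) *m ec) <= 4 * s * qf A u) ->
  forall v, qf A ((1%:M - omega *: (s *: A)) *m
     ((1%:M - (2 *: Rr^T) *m invmx (Rr *m A *m (2 *: Rr^T)) *m Rr *m A) *m v))
     <= (1 - eta / 4) * qf A v.
Proof.
move=> AT Apsd s0 Heig om0 eta0' eta4 heta Acu Happ v.
set P := 2 *: Rr^T; set Ac := Rr *m A *m P.
set z := invmx Ac *m Rr *m A *m v.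
set u := (1%:M - P *m invmx Ac *m Rr *m A) *m v.
have uE : u = v - P *m z by rewrite /u /z mulmxBl mul1mx !mulmxA.
have PT : P^T = 2 *: Rr by rewrite /P linearZ /= trmxK.
have PTAP : P^T *m A *m P = 2 *: Ac by rewrite PT -!scalemxAl.
have Gal : P^T *m A *m u = 0.
  rewrite uE mulmxBr /z !mulmxA PTAP -!scalemxAl mulmxV // mul1mx PT -!scalemxAl.
  by rewrite subrr.
have orth : forall w, dot (A *m u) (P *m w) = 0.
  move=> w; rewrite /dot (_ : (A *m u)^T *m (P *m w) = (P^T *m A *m u)^T *m w).
    by rewrite Gal trmx0 mul0mx mxE.
  by rewrite !trmx_mul trmxK !mulmxA.
set G := dot (A *m u) (A *m u).
have appr : qf A u <= 4 * s * G.
  have [ec hec] := Happ u.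
  set r := u - P *m ec in hec.
  have q1 : qf A u = dot (A *m u) r.
    rewrite qf_bil bil_dot //; rewrite [X in dot _ X = _](_ : u = r + P *m ec); last by rewrite /r subrK.
    by rewrite dotDr orth addr0.
  have ci := dot_ineq (A *m u) r (mulr_gt0 (ltr0n _ 4) s0).
  have h3 : dot r r / (4 * s) <= qf A u.
    by rewrite ler_pdivrMr ?mulr_gt0 // mulrC.
  rewrite -/G in ci; lra.
have sm := smooth_raw AT s0 Heig om0 heta u.
have h4 : eta * (qf A u / 4) <= eta * (s * G).
  by rewrite ler_wpM2l //; lra.
have Ku : qf A ((1%:M - omega *: (s *: A)) *m u) <= (1 - eta / 4) * qf A u.
  rewrite -/G in sm; lra.
have en : qf A u <= qf A v.
  have vE : v = u + P *m z by rewrite uE subrK.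
  rewrite [in X in _ <= X]vE !qf_bil bilDl !bilDr.
  have b1 : bil A u (P *m z) = 0 by rewrite bil_dot // orth.
  have b2 : bil A (P *m z) u = 0 by rewrite bil_sym // b1.
  rewrite b1 b2; have := Apsd (P *m z); rewrite qf_bil; lra.
apply: (le_trans Ku); rewrite ler_wpM2l //; lra.
Qed.

End D.


Section E.
Variable R : realType.

Lemma Tf_sym x y : Tf R x y = Tf R y x.
Proof. by rewrite /Tf; ifs. Qed.

Lemma Mk_sym k : (Mk R k)^T = Mk R k.
Proof. by apply/matrixP => i j; rewrite !mxE Tf_sym. Qed.

Lemma scaleMk_sym (a : R) k : (a *: Mk R k)^T = a *: Mk R k.
Proof. by rewrite linearZ /= Mk_sym. Qed.

Definition dk k : R := (2 ^ k)%:R * (2/3) - 1.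

Lemma dk_gt0 k : (1 <= k)%N -> 0 < dk k.
Proof.
move=> k1; have h : (2 <= 2 ^ k)%N by rewrite -{1}(expn1 2) leq_pexp2l.
have h' : (2 : R) <= (2 ^ k)%:R by rewrite ler_nat.
rewrite /dk; lra.
Qed.

Lemma Dg_Mk (a : R) k : Dg (a *: Mk R k) = (a * dk k)%:M.
Proof. by apply/matrixP => i j; rewrite !mxE /Tf eqxx /dk. Qed.

Lemma invDgA (a : R) k :
  invmx (Dg (a *: Mk R k)) *m (a *: Mk R k) = (a * dk k)^-1 *: (a *: Mk R k).
Proof. by rewrite Dg_Mk invmx_scalar mul_scalar_mx. Qed.

Lemma mnorm_sq n (M : 'M[R]_n) v : 0 <= qf M v -> mnorm M v ^+ 2 = qf M v.
Proof. by move=> h; rewrite /mnorm sqr_sqrtr. Qed.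

Lemma qf_scalar n (c : R) (g : 'cV[R]_n) : qf (c%:M) g = c * dot g g.
Proof. by rewrite /qf mul_mx_scalar -scalemxAl mxE. Qed.

Lemma pd_unit n (A : 'M[R]_n) : (forall x, qf A x = 0 -> x = 0) -> A \in unitmx.
Proof.
move=> H; rewrite unitmxE unitfE; apply/negP => /det0P [v nz vA].
have : v^T = 0 by apply: H; rewrite /qf trmxK vA mul0mx mxE.
by move=> h; move: nz; rewrite -(trmxK v) h trmx0 eqxx.
Qed.

Lemma delta_q n (S : 'M[R]_n) (i : 'I_n) : bil S (delta_mx i 0) (delta_mx i 0) = S i i.
Proof. by rewrite /bil trmx_delta -rowE -colE !mxE. Qed.

Lemma delta_dot n (i : 'I_n) : dot (delta_mx i 0 : 'cV[R]_n) (delta_mx i 0) = 1.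
Proof. by rewrite /dot trmx_delta -rowE !mxE !eqxx. Qed.

Lemma qfZMk (a : R) k x : qf (a *: Mk R k) x = a * qf (Mk R k) x.
Proof. exact: bilZA. Qed.

Lemma qfA_ge0 (a : R) k x : 0 <= a -> 0 <= qf (a *: Mk R k) x.
Proof. by move=> a0; rewrite qfZMk mulr_ge0 // qf_Mk_ge0. Qed.

Lemma scaleMk_unit (a : R) k : 0 < a -> (a *: Mk R k) \in unitmx.
Proof.
move=> a0; apply: pd_unit => x; rewrite qfZMk => /eqP; rewrite mulf_eq0 gt_eqF //=.
by move/eqP; apply: qf_Mk_eq0.
Qed.

End E.

Unset Implicit Arguments.
Set Strict Implicit.


Theorem mainTheorem10 (R : realType) (q : nat) (b eta0 omega eta : R) :
  (2 <= q)%N -> 0 < b ->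
  (forall k : nat, (1 <= k <= q)%N ->
     forall a : R,
       eigenvalue (invmx (Dg (Alev b q k)) *m Alev b q k) a -> a <= eta0) ->
  eta0 < 3 ->
  0 < omega -> omega < 2 / eta0 ->
  0 < eta -> eta <= omega * (2 - omega * eta0) ->
  (forall k : nat, (1 <= k <= q)%N ->
     forall v : 'cV[R]_(2 ^ k - 1),
       mnorm (Alev b q k) (Kjac omega (Alev b q k) *m v) ^+ 2
       <= mnorm (Alev b q k) v ^+ 2
          - eta * mnorm (invmx (Dg (Alev b q k))) (Alev b q k *m v) ^+ 2)
  /\
  (forall k : nat, (1 <= k)%N -> (k.+1 <= q)%N ->
     opnorm (Alev b q k.+1)
            (Kjac omega (Alev b q k.+1) *m Tcgc b q k)
       <= Num.sqrt (1 - eta / 4)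
     /\ Num.sqrt (1 - eta / 4) < 1).
Proof.
move=> q2 b0 Heig eta03 om0 omlt eta0' heta.
split.
  move=> k hk v.
  have [a a0 hA] : exists2 a : R, 0 < a & Alev b q k = a *: Mk R k by apply: Alev_Mk.
  have HeigK := Heig k hk; rewrite hA invDgA in HeigK.
  have k1 : (1 <= k)%N by case/andP: hk.
  have d0 := dk_gt0 R k1.
  have s0 : 0 < (a * dk R k)^-1 by rewrite invr_gt0 mulr_gt0.
  rewrite hA /Kjac invDgA Dg_Mk invmx_scalar.
  have n1 : forall x, 0 <= qf (a *: Mk R k) x by move=> x; apply: qfA_ge0; rewrite ltW.
  have n2 : forall x : 'cV[R]_(2 ^ k - 1), 0 <= qf ((a * dk R k)^-1%:M) x.
    by move=> x; rewrite qf_scalar mulr_ge0 ?dot_ge0 // ltW.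
  rewrite !mnorm_sq ?n1 ?n2 // qf_scalar.
  apply: (smooth_raw (scaleMk_sym a k) s0 HeigK om0 heta).
move=> k k1 kq.
have [a a0 hA] : exists2 a : R, 0 < a & Alev b q k.+1 = a *: Mk R k.+1 by apply: Alev_Mk.
have hk : (1 <= k.+1 <= q)%N by rewrite kq andbT.
have HeigK := Heig k.+1 hk; rewrite hA invDgA in HeigK.
have d0 := dk_gt0 R (ltn0Sn k).
set s := (a * dk R k.+1)^-1.
have s0 : 0 < s by rewrite invr_gt0 mulr_gt0.
have hc := Alev_coarsen b (kq : (k < q)%N).
set A := a *: Mk R k.+1.
have AT : A^T = A by apply: scaleMk_sym.
have e1 : 1 <= eta0.
  have hpos : (0 < 2 ^ k.+1 - 1)%N by rewrite expnS; have := expn_gt0 2 k; lia.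
  pose i0 : 'I_(2 ^ k.+1 - 1) := Ordinal hpos.
  have := rayleigh (S := s *: A) (eta := eta0) _ HeigK (delta_mx i0 0).
  rewrite -/(bil _ _ _) -/(dot _ _) delta_q delta_dot mulr1 !mxE /Tf eqxx.
  have -> : s * (a * ((2 ^ k.+1)%:R * (2 / 3) - 1)) = 1.
    by rewrite /s -/(dk R k.+1) mulVf // mulf_neq0 ?gt_eqF.
  by apply; rewrite linearZ /= AT.
have eta1 : eta <= 1.
  have h1 : omega ^+ 2 <= omega ^+ 2 * eta0 by rewrite ler_peMr // sqr_ge0.
  have h2 : 0 <= (1 - omega) ^+ 2 by rewrite sqr_ge0.
  have h3 : (1 - omega) ^+ 2 = 1 - 2 * omega + omega ^+ 2 by ring.
  rewrite h3 in h2; have h4 : omega * (2 - omega * eta0) = 2 * omega - omega ^+ 2 * eta0 by ring.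
  lra.
have Cu : (restr R k *m A *m (2 *: (restr R k)^T)) \in unitmx.
  have : coarsen A \in unitmx.
    by rewrite /A coarsenZ coarsen_Mk scalerA; apply: scaleMk_unit; rewrite mulr_gt0.
  by [].
have Happ : forall u, exists ec, dot (u - (2 *: (restr R k)^T) *m ec)
    (u - (2 *: (restr R k)^T) *m ec) <= 4 * s * qf A u.
  move=> u; exists (ecoarse u).
  have h := approx_mx u.
  rewrite /A qfZMk.
  have -> : 4 * s * (a * qf (Mk R k.+1) u) = 4 * qf (Mk R k.+1) u / dk R k.+1.
    by rewrite /s invfM; field; rewrite !gt_eqF.
  by rewrite ler_pdivlMr // mulrC.
have TL := twolevel AT (fun x => @qfA_ge0 R a k.+1 x (ltW a0)) s0 HeigK om0 (ltW eta0')
  (le_trans eta1 (ler_nat R 1 4)) heta Cu Happ.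
rewrite /Tcgc hc /coarsen hA /Kjac invDgA -/A -/s.
split; last by rewrite -[X in _ < X]sqrtr1 ltr_sqrt ?ltr01 //; lra.
rewrite /opnorm; apply: ge_sup.
  eexists; exists 0; split; last reflexivity.
  by rewrite /mnorm trmx0 !mul0mx mxE sqrtr0 ler01.
move=> r [v [hv ->]].
have hv' : qf A v <= 1.
  by move: hv; rewrite /mnorm -[X in _ <= X]sqrtr1 ler_sqrt.
have TLv := TL v; rewrite mulmxA in TLv.
rewrite /mnorm ler_sqrt; last lra.
apply: (le_trans TLv).
rewrite -[X in _ <= X]mulr1 ler_wpM2l //; lra.
Qed.
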